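(* Let $\mathcal{F}\subseteq[\omega]^{<\omega}$ be a compact hereditary family covering $\omega$. Then $X^{\mathcal{F}}=FIN(\lVert\cdot\rVert^{\mathcal{F}})$.
   Context: $\omega=\{1,2,3,\dots\}$; $[\omega]^{<\omega}$ is the family of finite subsets of $\omega$. Subsets of $\omega$ are identified with elements of $2^\omega$; compact means compact in $2^\omega$; hereditary means closed under subsets. A partition is a family $\mathcal{P}\subseteq\mathcal{P}(\omega)$ with $\emptyset\in\mathcal{P}$, $\bigcup\mathcal{P}=\omega$, elements pairwise disjoint; $\mathbb{P}_\mathcal{F}$ is the set of partitions contained in $\mathcal{F}$. For $x\in\mathbb{R}^\omega$, $\lVert x\rVert^{\mathcal{F}}=\inf_{\mathcal{P}\in\mathbb{P}_\mathcal{F}}\sum_{F\in\mathcal{P}}\sup_{k\in F}|x(k)|\in[0,\infty]$. $P_{\omega\setminus n}(x)$ is the sequence agreeing with $x$ on $\{n+1,n+2,\dots\}$ and $0$ on $\{1,\dots,n\}$. $FIN(\varphi)=\{x:\varphi(x)<\infty\}$, $EXH(\varphi)=\{x:\lim_n\varphi(P_{\omega\setminus n}(x))=0\}$, and $X^{\mathcal{F}}=EXH(\lVert\cdot\rVert^{\mathcal{F}})$. *)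

(* Defs.v *)
From HB Require Import structures.
From mathcomp Require Import all_boot all_order all_algebra.
From mathcomp Require Import all_classical all_reals all_analysis.
Set Implicit Arguments. Unset Strict Implicit. Unset Printing Implicit Defensive.
Import Order.TTheory GRing.Theory Num.Theory.
Local Open Scope classical_set_scope.
Local Open Scope ring_scope.

(* Conventions: omega = {1,2,3,...} is represented by nat = {0,1,2,...}
   via k <-> k+1.  Subsets of omega are elements of 2^omega = (nat -> bool),
   carrying the product (Cantor) topology of mathcomp-analysis. *)

Notation subset2 := cantor_space.

Definition finite_sub (A : subset2) : Prop := finite_set [set k | A k].

Definition sub2 (B A : subset2) : Prop := forall k, B k -> A k.

Definition hereditary (F : set subset2) : Prop :=
  forall A B, F A -> sub2 B A -> F B.

Definition covers_omega (F : set subset2) : Prop :=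
  forall k, exists2 A, F A & A k.

Definition is_partition (P : set subset2) : Prop :=
  [/\ P (fun _ => false),
      (forall k, exists2 A, P A & A k) &
      (forall A B, P A -> P B -> A <> B -> forall k, A k -> B k -> False)].

Definition partitions_in (F : set subset2) : set (set subset2) :=
  [set P | is_partition P /\ P `<=` F].

Definition supabs {R : realType} (x : nat -> R) (A : subset2) : \bar R :=
  ereal_sup ([set ((`|x k|)%:E) | k in [set k | A k]] `|` [set 0%E]).

Definition Fnorm {R : realType} (F : set subset2) (x : nat -> R) : \bar R :=
  ereal_inf [set esum P (supabs x) | P in partitions_in F].

(* P_{omega \ n}(x): agrees with x on {n+1, n+2, ...} and is 0 on {1..n};
   with the 0-based indexing this zeroes the indices k < n. *)
Definition tailP {R : realType} (n : nat) (x : nat -> R) : nat -> R :=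
  fun k => if (k < n)%N then 0 else x k.

Definition FIN {R : realType} (phi : (nat -> R) -> \bar R) : set (nat -> R) :=
  [set x | (phi x < +oo)%E].

Definition EXH {R : realType} (phi : (nat -> R) -> \bar R) : set (nat -> R) :=
  [set x | (fun n => phi (tailP n x)) @ \oo --> 0%E].

Definition XF {R : realType} (F : set subset2) : set (nat -> R) := EXH (Fnorm F).

(* Main.v *)
Require Import Defs.
From HB Require Import structures.
From mathcomp Require Import all_boot all_order all_algebra.
From mathcomp Require Import all_classical all_reals all_analysis.
Set Implicit Arguments. Unset Strict Implicit. Unset Printing Implicit Defensive.
Import Order.TTheory GRing.Theory Num.Theory.
Local Open Scope classical_set_scope.
Local Open Scope ring_scope.

Section S.
Variable R : realType.
Local Open Scope ereal_scope.

Lemma cvg0_ereal (u : nat -> \bar R) : (forall n, 0 <= u n) ->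
  (forall e : R, (0 < e)%R -> exists N, forall n, (N <= n)%N -> u n <= e%:E) ->
  u @ \oo --> 0.
Proof.
move=> u0 H; apply/fine_cvgP; split.
- have [N HN] := H 1%R ltr01. exists N => // n /= Nn.
  rewrite ge0_fin_numE //; apply: le_lt_trans (HN n Nn) _; exact: ltry.
- apply/cvgrPdist_le => e e0. have [N HN] := H e e0. exists N => // n /= Nn.
  rewrite sub0r normrN /=. have := HN n Nn; have := u0 n.
  by case: (u n) => //= r; rewrite !lee_fin => r0 re; rewrite ger0_norm.
Qed.

Lemma nat_bound (A : set nat) : finite_set A -> exists N, forall k, A k -> (k < N)%N.
Proof.
move/finite_seqP=> [s ->]; elim: s => [|a s [N HN]]; first by exists 0%N.
exists (maxn a.+1 N) => k /=; rewrite inE => /orP[/eqP->|ks].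
  by rewrite leq_max leqnn.
by rewrite leq_max (HN k ks) orbT.
Qed.

Lemma supabs_ge0 (x : nat -> R) (A : subset2) : 0 <= supabs x A.
Proof. by apply: ereal_sup_ubound; right. Qed.

Lemma supabs_le (x : nat -> R) (A : subset2) c : (forall k, A k -> (`|x k|)%:E <= c) -> 0 <= c ->
  supabs x A <= c.
Proof. by move=> h c0; apply: ge_ereal_sup => _ [[k Ak <-]|->]; [exact: h|]. Qed.

Lemma le_supabs (x y : nat -> R) (A : subset2) : (forall k, A k -> (`|x k| <= `|y k|)%R) ->
  supabs x A <= supabs y A.
Proof.
move=> h; apply: supabs_le (supabs_ge0 _ _) => k Ak.
apply: le_trans (_ : (`|y k|)%:E <= _); first by rewrite lee_fin h.
by apply: ereal_sup_ubound; left; exists k.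
Qed.


Lemma supabs_tail0 n (x : nat -> R) (A : subset2) : (forall k, A k -> (k < n)%N) ->
  supabs (tailP n x) A = 0.
Proof.
move=> h; apply/le_anti; rewrite supabs_ge0 andbT.
by apply: supabs_le => // k Ak; rewrite /tailP h ?normr0.
Qed.

Lemma le_tail n (x : nat -> R) k : (`|tailP n x k| <= `|x k|)%R.
Proof. by rewrite /tailP; case: ifP; rewrite ?normr0. Qed.

Definition meets (n : nat) : set subset2 := [set A | exists k, (k < n)%N /\ A k].

Lemma supabs_split n (x : nat -> R) (A : subset2) :
  supabs x A <= supabs (tailP n x) A +
     (if A \in meets n then (\sum_(k < n) `|x k|)%:E else 0).
Proof.
apply: supabs_le; last by rewrite adde_ge0 ?supabs_ge0//; case: ifP => // _; rewrite lee_fin sumr_ge0.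
move=> k Ak; case: (ltnP k n) => kn.
  have -> : A \in meets n by rewrite inE; exists k.
  apply: le_trans (_ : (\sum_(k < n) `|x k|)%:E <= _); last by rewrite leeDr ?supabs_ge0.
  by rewrite lee_fin (bigD1 (Ordinal kn)) //= lerDl sumr_ge0 //= => *.
apply: le_trans (_ : supabs (tailP n x) A <= _); last first.
  by rewrite leeDl//; case: ifP => // _; rewrite lee_fin sumr_ge0.
have -> : (`|x k|)%R = (`|tailP n x k|)%R by rewrite /tailP ltnNge kn.
by apply: ereal_sup_ubound; left; exists k.
Qed.


Lemma exh_fin (F : set subset2) (x : nat -> R) : XF F x -> FIN (Fnorm F) x.
Proof.
move=> /fine_cvgP[[N _ HN] _].
have := HN N (leqnn N); rewrite /= fin_numE => /andP[_ /eqP Hn].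
have : Fnorm F (tailP N x) < +oo by rewrite ltey; apply/eqP.
move=> /ereal_inf_lt[_ [Q [PQ QF] <-]] HQ.
rewrite /FIN /=.
apply: le_lt_trans (_ : esum Q (supabs x) < +oo); last first.
  apply: le_lt_trans (le_esum (fun A _ => supabs_split N x A)) _.
  rewrite esumD; last 2 first.
  - by move=> *; exact: supabs_ge0.
  - by move=> *; case: ifP => // _; rewrite lee_fin sumr_ge0.
  rewrite lte_add_pinfty // -esum_mkcondr.
  case: PQ => _ cov disj.
  pose f k := projT1 (cid2 (cov k)).
  have finQ : finite_set (Q `&` meets N).
    apply: sub_finite_set (finite_image f (finite_II N)) => A [QA [k [kN Ak]]].
    exists k => //; rewrite /f; case: cid2 => B QB Bk /=.
    have [//|ne] := pselect (B = A).
    by case: (disj _ _ QB QA ne k Bk Ak).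
  rewrite esum_fset //; last by move=> *; rewrite lee_fin sumr_ge0.
  by rewrite fsumEFin // ltry.
by apply: ereal_inf_lbound; exists Q.
Qed.


Lemma fin_exh (F : set subset2) (x : nat -> R) :
  (forall A, F A -> finite_sub A) -> FIN (Fnorm F) x -> XF F x.
Proof.
move=> Ffin; rewrite /FIN /= => /ereal_inf_lt[_ [P [PP PF] <-]] Ps.
rewrite /XF /EXH /=; apply: cvg0_ereal.
  move=> n; apply: le_ereal_inf_tmp => _ [Q _ <-].
  by apply: esum_ge0 => *; exact: supabs_ge0.
move=> e e0.
set s := esum P (supabs x).
have s0 : 0 <= s by apply: esum_ge0 => *; exact: supabs_ge0.
have sfin : s \is a fin_num by rewrite ge0_fin_numE.
have : s - e%:E < s by rewrite lteBlDr // lteDl // lte_fin.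
move=> /ereal_sup_gt[_ [X [finX XP] <-]] HX.
have [N HN] : exists N, forall k, (\bigcup_(A in X) [set k | A k]) k -> (k < N)%N.
  apply: nat_bound; apply: bigcup_finite => // A XA; exact: Ffin (PF _ (XP _ XA)).
exists N => n Nn.
apply: le_trans (_ : esum P (supabs (tailP n x)) <= _).
  by apply: ereal_inf_lbound; exists P.
rewrite (esumID X); last by move=> *; exact: supabs_ge0.
rewrite esum1; last first.
  move=> A [_ XA]; apply: supabs_tail0 => k Ak.
  by apply: leq_trans (HN k _) Nn; exists A.
rewrite add0e.
apply: le_trans (_ : esum (P `&` ~` X) (supabs x) <= _).
  by apply: le_esum => A _; apply: le_supabs => k _; exact: le_tail.
have := esumID X P (supabs x) (fun A _ => supabs_ge0 x A).
rewrite -/s (setIidr XP) esum_fset //; last by move=> *; exact: supabs_ge0.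
set a := (\sum_(i \in X) supabs x i) in HX *.
set b := esum _ _.
move=> sab.
have a0 : 0 <= a by apply: fsume_ge0 => *; exact: supabs_ge0.
have b0 : 0 <= b by apply: esum_ge0 => *; exact: supabs_ge0.
have afin : a \is a fin_num.
  by rewrite ge0_fin_numE //; apply: le_lt_trans (_ : a <= s) _; [rewrite sab leeDl | rewrite -ge0_fin_numE].
move: HX; rewrite lteBlDr // sab lteD2lE // => /ltW //.
Qed.

End S.

Unset Implicit Arguments.
Local Close Scope ring_scope.

Theorem mainTheorem6 (R : realType) (F : set subset2) :
  (forall A, F A -> finite_sub A) ->
  compact F ->
  hereditary F ->
  covers_omega F ->
  XF (R := R) F = FIN (Fnorm F).
Proof.
move=> Ffin _ _ _; apply/seteqP; split => x.
- exact: exh_fin.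
- exact: fin_exh.
Qed.
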